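(* Let $n\ge 3$. The cycle $C_n$ is pseudo-Gorenstein$^{*}$ if and only if $n\equiv 1,2,5,10 \pmod{12}$.
   Context: For a finite simple graph $G$ on vertex set $[N]$, let $S=K[x_1,\dots,x_N]$ ($K$ a field) and $I(G)$ the edge ideal generated by $x_ix_j$, $\{i,j\}\in E(G)$. Let $\alpha(G)$ be the independence number (equal to $\dim S/I(G)$). Write the Hilbert series of $S/I(G)$ uniquely as $(h_0+\dots+h_st^s)/(1-t)^{\alpha(G)}$ with $h_s\ne 0$; the numerator is the $h$-polynomial $h_G(t)$, and $\mathfrak a(G)=s-\alpha(G)$. $G$ is pseudo-Gorenstein$^{*}$ if $h_s=1$ and $\mathfrak a(G)=0$. $C_n$ denotes the cycle on $n$ vertices. *)

(* Defs.v *)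
From mathcomp Require Import all_boot all_order all_algebra.
Set Implicit Arguments. Unset Strict Implicit. Unset Printing Implicit Defensive.
Import GRing.Theory Num.Theory.

(* A finite simple graph on the vertex set T is a relation e : rel T
   (used symmetric and irreflexive). *)

Definition indep (T : finType) (e : rel T) (A : {set T}) : bool :=
  [forall x in A, forall y in A, ~~ e x y].

Definition alpha (T : finType) (e : rel T) : nat :=
  \max_(A : {set T} | indep e A) #|A|.

(* Hilbert function of S/I(G) in degree d: the K-dimension of the degree-d
   component, i.e. the number of monomials x^m of degree d not lying in I(G).
   A monomial x^m (exponents m : T -> nat, each <= d when the degree is d)
   lies in I(G) iff its support contains an edge. *)
Definition hilb (T : finType) (e : rel T) (d : nat) : nat :=
  #|[set m : {ffun T -> 'I_d.+1} |
      ((\sum_(x : T) (m x : nat)) == d) && indep e [set x | 0 < (m x : nat)]]|.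

(* Coefficients of the numerator h_G(t) = (1-t)^alpha * sum_d H(d) t^d. *)
Definition hcoef (T : finType) (e : rel T) (k : nat) : int :=
  \sum_(j < (alpha e).+1 | (j <= k)%N)
     ((-1) ^+ j * ('C(alpha e, j))%:Z * (hilb e (k - j))%:Z)%R.

(* pseudo-Gorenstein^* : the top (last nonzero) coefficient h_s of the
   h-polynomial equals 1 and s = alpha(G), i.e. a(G) = 0. *)
Definition pseudo_gorenstein_star (T : finType) (e : rel T) : Prop :=
  hcoef e (alpha e) = 1%R /\ (forall k, (alpha e < k)%N -> hcoef e k = 0%R).

Definition cycle_graph (n : nat) : rel 'I_n :=
  fun i j => ((j : nat) == (i.+1 %% n)) || ((i : nat) == (j.+1 %% n)).
Arguments cycle_graph n : clear implicits.

(* Main.v *)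
Require Import Defs.
From mathcomp Require Import all_boot all_order all_algebra.
From mathcomp Require Import zify ring.
Set Implicit Arguments. Unset Strict Implicit. Unset Printing Implicit Defensive.
Import GRing.Theory Num.Theory.
Local Open Scope ring_scope.

Definition Ypol (d : nat) : {poly int} := \sum_(j < d) 'X^(j.+1).

Lemma powXn (p q : {poly int}) n i : exists r, (p + 'X^n * q) ^+ i = p ^+ i + 'X^n * r.
Proof.
elim: i => [|i [r IH]]; first by exists 0; rewrite !expr0 mulr0 addr0.
exists (q * p ^+ i + p * r + 'X^n * q * r).
by rewrite !exprS IH; ring.
Qed.

Lemma coef_1subX m t : ((1 - 'X : {poly int}) ^+ m)`_t = (-1) ^+ t * ('C(m, t))%:Z.
Proof.
elim: m t => [|m IH] t.
  by rewrite expr0 coef1 bin0n; case: t => [|t] //=; rewrite mulr0.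
rewrite exprS mulrBl mul1r coefB coefXM IH.
case: t => [|t] /=; first by rewrite subr0 !bin0 expr0.
rewrite IH binS PoszD mulrDr exprS mulN1r; ring.
Qed.

Lemma Ysplit d k : (d <= k)%N -> exists Q, Ypol k = Ypol d + 'X^(d.+1) * Q.
Proof.
elim: k => [|k IH] hdk.
  by exists 0; move: hdk; rewrite leqn0 => /eqP ->; rewrite mulr0 addr0.
case: (ltngtP d k.+1) hdk => // [hlt|->] _; last by exists 0; rewrite mulr0 addr0.
have [Q HQ] := IH hlt.
exists (Q + 'X^(k - d)).
rewrite /Ypol big_ord_recr /= -/(Ypol k) HQ mulrDr -exprD.
have -> : (d.+1 + (k - d))%N = k.+1 by lia.
by rewrite addrA.
Qed.

Lemma coef_Y_lift d k i : (d <= k)%N -> ((Ypol d) ^+ i)`_d = ((Ypol k) ^+ i)`_d.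
Proof.
move=> hdk; have [Q ->] := Ysplit hdk.
have [r ->] := powXn (Ypol d) Q d.+1 i.
by rewrite coefD coefXnM ltnSn addr0.
Qed.

Lemma geomX k : (1 - 'X) * (\sum_(j < k) 'X^j) = 1 - 'X^k :> {poly int}.
Proof.
elim: k => [|k IH]; first by rewrite big_ord0 mulr0 expr0 subrr.
by rewrite big_ord_recr /= mulrDr IH exprS; ring.
Qed.

Lemma YpolE k : Ypol k = 'X * (\sum_(j < k) 'X^j).
Proof. by rewrite /Ypol mulr_sumr; apply: eq_bigr => j _; rewrite exprS. Qed.

Lemma coef_main a k i : (i <= a)%N ->
  (((1 - 'X) ^+ a) * (Ypol k) ^+ i)`_k =
  if (i <= k)%N then (-1) ^+ (k - i) * ('C(a - i, k - i))%:Z else 0.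
Proof.
move=> hia.
have -> : ((1 - 'X) ^+ a) * (Ypol k) ^+ i =
   ((1 - 'X) ^+ (a - i) * 'X^i) * (1 + 'X^k * (-1)) ^+ i.
  rewrite YpolE -{1}(subnK hia) exprD mulrN1 -geomX !exprMn; ring.
case: i hia => [|i] hia.
  rewrite !expr0 !mulr1 subn0 -[_ ^+ a]mulr1 -(expr0 'X) mulrC coefXnM ltn0 subn0 coef_1subX.
  by rewrite leq0n.
have [r ->] := powXn 1 (-1) k i.+1.
rewrite expr1n mulrDr mulr1.
have -> : (1 - 'X) ^+ (a - i.+1) * 'X^(i.+1) * ('X^k * r) =
   'X^(k + i.+1) * ((1 - 'X) ^+ (a - i.+1) * r) by rewrite exprD; ring.
rewrite coefD (mulrC _ ('X^_)) !coefXnM coef_1subX.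
have -> : (k < k + i.+1)%N by lia.
by rewrite addr0 ltnS; case: leqP.
Qed.

Lemma sum_widen_aux (F : nat -> int) a k : (forall j, (a < j)%N -> F j = 0) ->
  \sum_(j < k.+1) F j = \sum_(j < a.+1 | (j <= k)%N) F j.
Proof.
move=> hF.
rewrite [RHS](big_ord_widen_cond (a + k).+1 (fun j => (j <= k)%N) F); last by lia.
rewrite [LHS](big_ord_widen (a + k).+1 F); last by lia.
rewrite big_mkcond [RHS]big_mkcond; apply: eq_bigr => j _ /=.
rewrite ltnS; case: (leqP j k) => // hjk; case: (ltnP j a.+1) => // hja.
by rewrite hF.
Qed.

Lemma coef_conv a k (P : {poly int}) : ((1 - 'X) ^+ a * P)`_k =
  \sum_(j < a.+1 | (j <= k)%N) ((-1) ^+ j * ('C(a, j))%:Z * P`_(k - j)).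
Proof.
rewrite coefM.
transitivity (\sum_(j < k.+1) ((-1) ^+ j * ('C(a, j))%:Z * P`_(k - j))).
  by apply: eq_big => // j _; rewrite coef_1subX.
rewrite (@sum_widen_aux (fun j => (-1) ^+ j * ('C(a, j))%:Z * P`_(k - j)) a k) // => j hj.
by rewrite bin_small // mulr0 mul0r.
Qed.

Section General.
Variables (T : finType) (e : rel T).

Definition supp d (m : {ffun T -> 'I_d.+1}) : {set T} := [set x | (0 < m x)%N].

Definition Gf d (S : {set T}) (x : T) (j : 'I_d.+1) : {poly int} :=
  if x \in S then (if (0 < j)%N then 'X^j else 0) else (if (j == 0 :> nat) then 1 else 0).

Lemma Ypow d (S : {set T}) : Ypol d ^+ #|S| =
  \sum_(m : {ffun T -> 'I_d.+1}) (if supp m == S then 'X^(\sum_x (m x : nat)) else 0).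
Proof.
rewrite -prodr_const big_mkcond /=.
transitivity (\prod_x \sum_(j : 'I_d.+1) Gf S x j).
  apply: eq_bigr => x _; rewrite big_ord_recl /Gf /=.
  case: (x \in S).
    by rewrite add0r /Ypol; apply: eq_big => // j _.
  by rewrite big1 ?addr0.
rewrite bigA_distr_bigA; apply: eq_bigr => m _.
case: eqP => [<-|hne].
  rewrite -prodrXr; apply: eq_bigr => x _; rewrite /Gf /supp inE.
  case h: (0 < m x)%N => //.
  have -> : (m x : nat) = 0%N by apply/eqP; rewrite -leqn0 leqNgt h.
  by rewrite expr0.
case: (boolP [exists x, (x \in supp m) != (x \in S)]) => [/existsP [x hx]| /existsPn hall].
  rewrite (bigD1 x) //= /Gf.
  move: hx; rewrite /supp inE.
  case: (x \in S); case h: (0 < m x)%N => //= _.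
    by rewrite mul0r.
  have -> : (m x == 0 :> nat) = false by apply/negbTE; rewrite -lt0n h.
  by rewrite mul0r.
exfalso; apply: hne; apply/setP => x; apply/eqP.
by have := hall x; rewrite negbK.
Qed.

Lemma hilb_coef d : (hilb e d)%:Z =
  (\sum_(S : {set T} | indep e S) Ypol d ^+ #|S|)`_d.
Proof.
under eq_bigr => S _ do rewrite Ypow.
rewrite exchange_big /=.
transitivity ((\sum_(m : {ffun T -> 'I_d.+1})
   (if indep e (supp m) then 'X^(\sum_x (m x : nat)) else 0 : {poly int}))`_d).
  rewrite coef_sum /hilb -sum1_card -natz natr_sum big_mkcond /=.
  apply: eq_big => // m _; rewrite inE.
  case: (indep e _); last by rewrite andbF coef0.
  by rewrite coefXn andbT eq_sym; case: (_ == _).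
apply: (congr1 (fun p : {poly int} => p`_d)); apply: eq_bigr => m _.
rewrite [RHS]big_mkcond /= (bigD1 (supp m)) //= eqxx [X in _ + X]big1 ?addr0 // => S hS.
by rewrite eq_sym (negbTE hS); case: (indep e _).
Qed.

Lemma indep_le (S : {set T}) : indep e S -> (#|S| <= alpha e)%N.
Proof. by move=> h; rewrite /alpha; apply: (leq_bigmax_cond S h). Qed.

Lemma hcoef_formula k : hcoef e k = \sum_(S : {set T} | indep e S)
  (if (#|S| <= k)%N then (-1) ^+ (k - #|S|) * ('C(alpha e - #|S|, k - #|S|))%:Z else 0).
Proof.
rewrite /hcoef.
transitivity (((1 - 'X) ^+ alpha e * \sum_(S : {set T} | indep e S) Ypol k ^+ #|S|)`_k).
  rewrite coef_conv; apply: eq_big => // j hj.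
  rewrite hilb_coef !coef_sum; congr (_ * _); apply: eq_big => // S _.
  by apply: coef_Y_lift; lia.
rewrite mulr_sumr coef_sum; apply: eq_big => // S hS.
by apply: coef_main; apply: indep_le.
Qed.

Lemma hcoef_gt k : (alpha e < k)%N -> hcoef e k = 0.
Proof.
move=> hk; rewrite hcoef_formula big1 // => S hS.
case: leqP => // _; have := indep_le hS => hSa.
by rewrite bin_small ?mulr0 //; lia.
Qed.

Lemma sign_sq (i : nat) : (-1) ^+ i * (-1) ^+ i = 1 :> int.
Proof. by elim: i => [|i IH]; rewrite ?mulr1 // !exprS; rewrite -[RHS]IH; ring. Qed.

Lemma hcoef_top : hcoef e (alpha e) =
  (-1) ^+ (alpha e) * \sum_(S : {set T} | indep e S) (-1) ^+ #|S|.
Proof.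
rewrite hcoef_formula mulr_sumr; apply: eq_bigr => S hS.
have hSa := indep_le hS; rewrite hSa binn mulr1.
by rewrite -{2}(subnK hSa) exprD -mulrA sign_sq mulr1.
Qed.

End General.

Close Scope ring_scope.

Lemma modS_ord n (x : 'I_n) : (x.+1 %% n)%N = if x.+1 == n then 0%N else x.+1.
Proof.
case: eqP => [->|h]; first by rewrite modnn.
by rewrite modn_small //; have := ltn_ord x; lia.
Qed.

Lemma cgE n (x y : 'I_n) : cycle_graph n x y =
  [|| (y : nat) == x.+1, (x : nat) == y.+1, ((x : nat) == n.-1) && ((y : nat) == 0%N)
    | ((y : nat) == n.-1) && ((x : nat) == 0%N)].
Proof.
rewrite /cycle_graph !modS_ord.
have hx := ltn_ord x; have hy := ltn_ord y.
case: (x.+1 =P n); case: (y.+1 =P n) => * ; lia.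
Qed.

Lemma indepP (T : finType) (e : rel T) (A : {set T}) :
  reflect (forall x y, x \in A -> y \in A -> ~~ e x y) (indep e A).
Proof.
apply: (iffP forall_inP) => [h x y hx hy| h x hx].
  by have /forall_inP := h x hx; apply.
by apply/forall_inP => y hy; apply: h.
Qed.

Lemma alpha_cycle n : (3 <= n)%N -> alpha (cycle_graph n) = n./2.
Proof.
move=> hn; have hh := odd_double_half n; rewrite -muln2 in hh.
move: hh; move: (odd n) => b; move: (n./2) => h hh.
apply/eqP; rewrite eqn_leq; apply/andP; split.
  apply/bigmax_leqP => S /indepP hS.
  have hdisj : [disjoint S & (@ordS n) @: S].
    rewrite -setI_eq0; apply/eqP/setP => y; rewrite !inE.
    apply/negP => /andP [hy /imsetP [x hx hxy]].
    by have := hS x y hx hy; rewrite /cycle_graph hxy /= eqxx.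
  have := max_card (mem (S :|: (@ordS n) @: S)).
  rewrite card_ord cardsU (card_imset _ (@ordS_inj n)).
  move: hdisj; rewrite -setI_eq0 => /eqP ->; rewrite cards0 subn0.
  by case: b hh => /= hh; lia.
have hlt : forall j : 'I_h, (j * 2 < n)%N.
  by move=> j; have := ltn_ord j; case: b hh => /= hh; lia.
pose f (j : 'I_h) : 'I_n := Ordinal (hlt j).
have hf : forall j : 'I_h, (f j : nat) = (j * 2)%N by [].
have finj : injective f.
  move=> j j' /(congr1 val); rewrite /= => hj; apply: val_inj => /=; lia.
have <- : #|f @: [set: 'I_h]| = h by rewrite card_imset // cardsT card_ord.
apply: leq_bigmax_cond; apply/indepP => x y /imsetP [j _ ->] /imsetP [j' _ ->].
rewrite cgE !hf; have := ltn_ord j; have := ltn_ord j'.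
by case: b hh => /= hh hj hj'; lia.
Qed.

Local Open Scope ring_scope.

Section Paths.
Variable n : nat.

Definition pind (l r : nat) (A : {set 'I_n}) : bool :=
  [forall x in A, (l <= x < r)%N] && [forall x in A, forall y in A, (y : nat) != x.+1].

Definition Pl (l r : nat) : int := \sum_(A : {set 'I_n} | pind l r A) (-1) ^+ #|A|.

Lemma pindP l r (A : {set 'I_n}) : reflect
  ((forall x, x \in A -> (l <= x)%N /\ (x < r)%N) /\
   (forall x y, x \in A -> y \in A -> (y : nat) <> x.+1)) (pind l r A).
Proof.
apply: (iffP andP) => [[/forall_inP h1 /forall_inP h2]|[h1 h2]]; split.
- by move=> x /h1 /andP.
- by move=> x y hx hy; have /forall_inP := h2 x hx; move/(_ y hy)/eqP.
- by apply/forall_inP => x /h1 [-> ->].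
- apply/forall_inP => x hx; apply/forall_inP => y hy; apply/eqP; exact: h2.
Qed.

Lemma Pl_empty l r : (r <= l)%N -> Pl l r = 1.
Proof.
move=> hrl; rewrite /Pl (big_pred1 set0) ?cards0 ?expr0 // => A /=.
apply/pindP/eqP => [[h1 _]|->].
  apply/setP => x; rewrite inE; apply/negP => /h1; lia.
by split => x; rewrite inE.
Qed.

Lemma Pl_rec l r : (l <= r)%N -> (r < n)%N -> Pl l r.+1 = Pl l r - Pl l r.-1.
Proof.
move=> hlr hrn; pose x : 'I_n := Ordinal hrn.
rewrite /Pl (bigID (fun A : {set 'I_n} => x \in A)) /= addrC; congr (_ + _).
  apply: eq_bigl => A; apply/andP/pindP => [[/pindP [h1 h2] hx]|[h1 h2]].
    split=> // y hy; have [? ?] := h1 y hy; split => //.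
    have : y != x by apply/eqP => hyx; rewrite -hyx hy in hx.
    rewrite -val_eqE /= => /eqP; lia.
  split; last by apply/negP => /h1 /= [_]; lia.
  apply/pindP; split => // y hy; have [? ?] := h1 y hy; split => //; lia.
rewrite (reindex_onto (fun B => x |: B) (fun A => A :\ x)) /=; last first.
  by move=> A /andP [_ hx]; rewrite setD1K.
rewrite -sumrN; apply: eq_big => [B|B hB].
  rewrite setU11 andbT.
  apply/andP/pindP => [[/pindP [h1 h2] /eqP hB]|[h1 h2]].
    have hxB : x \notin B by rewrite -hB !inE eqxx.
    split.
      move=> y hy; have [? ?] := h1 y (setU1r x hy).
      have : y != x by apply/eqP => hyx; rewrite -hyx hy in hxB.
      rewrite -val_eqE /= => /eqP hyx.
      have : (x : nat) <> y.+1 by apply: h2; rewrite ?setU11 ?setU1r.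
      rewrite /=; lia.
    by move=> y z hy hz; apply: h2; rewrite setU1r.
  have hxB : x \notin B by apply/negP => /h1 /= [_]; lia.
  split; last by rewrite setU1K.
  apply/pindP; split.
    move=> y; rewrite in_setU1 => /orP [/eqP -> /=|/h1]; lia.
  move=> y z; rewrite !in_setU1 => /orP [/eqP -> |hy] /orP [/eqP -> |hz] /=.
  - lia.
  - have [? ?] := h1 z hz; lia.
  - have [? ?] := h1 y hy; lia.
  - exact: h2.
move: hB => /andP [_ /eqP hB].
have hxB : x \notin B by rewrite -hB !inE eqxx.
by rewrite cardsU1 hxB exprS mulN1r.
Qed.

Fixpoint pseq (k : nat) : int :=
  match k with 0 => 1 | 1 => 0 | (k'.+1 as k1).+1 => pseq k1 - pseq k' end.

Lemma Pl_val l k : (l + k <= n)%N -> Pl l (l + k) = pseq k.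
Proof.
elim/ltn_ind: k => [[|[|k]]] IH hk.
- by rewrite addn0 Pl_empty.
- rewrite addn1 Pl_rec //; last by lia.
  by rewrite !Pl_empty //; lia.
- have -> : (l + k.+2 = (l + k.+1).+1)%N by lia.
  rewrite Pl_rec; [|lia|lia].
  have -> : ((l + k.+1).-1 = l + k)%N by lia.
  rewrite !IH //; lia.
Qed.

End Paths.

Lemma cyc_sum n : (3 <= n)%N ->
  \sum_(A : {set 'I_n} | indep (cycle_graph n) A) (-1) ^+ #|A| = pseq (n - 1) - pseq (n - 3).
Proof.
move=> hn; have hn0 : (0 < n)%N by lia.
pose z : 'I_n := Ordinal hn0.
rewrite (bigID (fun A : {set 'I_n} => z \in A)) /= addrC; congr (_ + _).
  have -> : pseq (n - 1) = Pl n 1 (1 + (n - 1)) by rewrite Pl_val //; lia.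
  have -> : (1 + (n - 1) = n)%N by lia.
  apply: eq_bigl => A; apply/andP/pindP => [[/indepP hA hz]|[h1 h2]].
    split.
      move=> x hx; split; last exact: ltn_ord.
      have : x != z by apply/eqP => hxz; rewrite -hxz hx in hz.
      by rewrite -val_eqE /=; lia.
    move=> x y hx hy; have := hA x y hx hy; rewrite cgE; lia.
  split; last by apply/negP => /h1 /= [] ; lia.
  apply/indepP => x y hx hy; rewrite cgE.
  have [? ?] := h1 x hx; have [? ?] := h1 y hy.
  have := h2 x y hx hy; have := h2 y x hy hx; lia.
have -> : pseq (n - 3) = Pl n 2 (2 + (n - 3)) by rewrite Pl_val //; lia.
have -> : (2 + (n - 3) = n - 1)%N by lia.
rewrite /Pl (reindex_onto (fun B => z |: B) (fun A => A :\ z)) /=; last first.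
  by move=> A /andP [_ hx]; rewrite setD1K.
rewrite -sumrN; apply: eq_big => [B|B hB].
  rewrite setU11 andbT.
  apply/andP/pindP => [[/indepP hA /eqP hB]|[h1 h2]].
    have hzB : z \notin B by rewrite -hB !inE eqxx.
    split.
      move=> y hy; have : y != z by apply/eqP => hyz; rewrite -hyz hy in hzB.
      rewrite -val_eqE /= => hy0.
      have := hA z y (setU11 _ _) (setU1r z hy); rewrite cgE /=.
      have := ltn_ord y; lia.
    move=> x y hx hy; have := hA x y (setU1r z hx) (setU1r z hy); rewrite cgE; lia.
  have hzB : z \notin B by apply/negP => /h1 /= [] ; lia.
  split; last by rewrite setU1K.
  apply/indepP => x y; rewrite cgE !in_setU1 => /orP [/eqP -> |hx] /orP [/eqP -> |hy] /=.
  - lia.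
  - have [? ?] := h1 y hy; lia.
  - have [? ?] := h1 x hx; lia.
  - have [? ?] := h1 x hx; have [? ?] := h1 y hy.
    have := h2 x y hx hy; have := h2 y x hy hx; lia.
move: hB => /andP [_ /eqP hB].
have hzB : z \notin B by rewrite -hB !inE eqxx.
by rewrite cardsU1 hzB exprS mulN1r.
Qed.


Lemma pseq6 k : pseq k.+3.+3 = pseq k.
Proof. rewrite /=; ring. Qed.

Lemma pseq12 k : pseq (k + 12) = pseq k.
Proof. have -> : (k + 12 = (k.+3.+3).+3.+3)%N by lia. by rewrite !pseq6. Qed.

Lemma final_arith n : (3 <= n)%N ->
  ((-1) ^+ (n./2) * (pseq (n - 1) - pseq (n - 3)) = 1 :> int) <->
  ((n %% 12)%N \in ([:: 1; 2; 5; 10] : seq nat)).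
Proof.
suff : (3 <= n)%N -> ((-1) ^+ (n./2) * (pseq (n - 1) - pseq (n - 3)) == 1 :> int) =
  ((n %% 12)%N \in ([:: 1; 2; 5; 10] : seq nat)).
  by move=> h hn; rewrite -(h hn); split => [/eqP|/eqP].
elim/ltn_ind: n => n IH hn.
case: (ltnP n 15) => h.
  do 15! (case: n hn h IH => [|n] hn h IH; [solve [move: hn; vm_compute; done | vm_compute; done] | ]).
  lia.
have -> : n = ((n - 12) + 12)%N by lia.
rewrite halfD /= andbF add0n exprD.
have -> : ((n - 12 + 12 - 1) = (n - 13) + 12)%N by lia.
have -> : ((n - 12 + 12 - 3) = (n - 15) + 12)%N by lia.
rewrite !pseq12 modnDr.
have -> : ((-1) ^+ 6 = 1 :> int) by [].
rewrite mulr1 -IH; [|lia|lia].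
have -> : (n - 13 = n - 12 - 1)%N by lia.
by have -> : (n - 15 = n - 12 - 3)%N by lia.
Qed.

Close Scope ring_scope.

Theorem theorem2p3 (n : nat) (hn : (3 <= n)%N) :
  pseudo_gorenstein_star (cycle_graph n) <-> ((n %% 12)%N \in ([:: 1; 2; 5; 10] : seq nat)).
Proof.
have key : hcoef (cycle_graph n) (alpha (cycle_graph n)) =
  ((-1) ^+ (n./2) * (pseq (n - 1) - pseq (n - 3)))%R.
  by rewrite hcoef_top cyc_sum // alpha_cycle.
rewrite /pseudo_gorenstein_star key -final_arith //.
split => [[]//|h]; split => // k hk; exact: hcoef_gt.
Qed.
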